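(* Let $f\in R=D[t;\sigma,\delta]$ be monic of degree $m\ge 2$. Then $f$ is right semi-invariant if and only if $D\subseteq \mathrm{Nuc}_r(S_f)$. In particular, if $f$ is right semi-invariant, then either $\mathrm{Nuc}(S_f)=D$ or $S_f$ is associative.
   Context: $D$ is an associative division ring with center $F$, $\sigma$ is a ring endomorphism of $D$ and $\delta$ is a left $\sigma$-derivation of $D$ (additive with $\delta(ab)=\sigma(a)\delta(b)+\delta(a)b$). $R=D[t;\sigma,\delta]$ is the skew polynomial ring of polynomials $\sum a_it^i$, $a_i\in D$, with multiplication determined by $ta=\sigma(a)t+\delta(a)$. For monic $f$ of degree $m$, every $g\in R$ can be written uniquely as $g=qf+r$ with $\deg r<m$; write $r=g\ \mathrm{mod}_r f$. The Petit algebra $S_f$ is the set of elements of $R$ of degree $<m$ with multiplication $g\circ h=gh\ \mathrm{mod}_r f$; it is a unital nonassociative ring. For a ring $A$ with associator $[x,y,z]=(xy)z-x(yz)$: $\mathrm{Nuc}_l(A)=\{x:[x,A,A]=0\}$, $\mathrm{Nuc}_m(A)=\{x:[A,x,A]=0\}$, $\mathrm{Nuc}_r(A)=\{x:[A,A,x]=0\}$, and $\mathrm{Nuc}(A)$ is their intersection. $D$ is viewed inside $S_f$ as the polynomials of degree $0$. $f$ is called right semi-invariant if $fD\subseteq Df$, i.e. for every $a\in D$ there is $b\in D$ with $f(t)a=bf(t)$. *)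

(* Defs.v *)
From HB Require Import structures.
From mathcomp Require Import all_boot all_order all_algebra.
Set Implicit Arguments. Unset Strict Implicit. Unset Printing Implicit Defensive.
Import GRing.Theory.
Local Open Scope ring_scope.

Section Skew.
Variable D : unitRingType.
Variable sigma : D -> D.
Variable delta : D -> D.

(* A skew polynomial sum_i a_i t^i is represented by its coefficient list,
   i.e. by an element of {poly D}; only the multiplication differs. *)

(* left multiplication by t:  t * (sum a_i t^i) = sum (sigma a_i t^(i+1) + delta a_i t^i) *)
Definition skew_mulX (p : {poly D}) : {poly D} :=
  map_poly sigma p * 'X + map_poly delta p.

Definition skew_mul (g h : {poly D}) : {poly D} :=
  \sum_(i < size g) (g`_(nat_of_ord i))%:P * iter (nat_of_ord i) skew_mulX h.

Fixpoint skew_rmod_rec (f : {poly D}) (n : nat) (g : {poly D}) : {poly D} :=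
  match n with
  | 0 => g
  | n'.+1 =>
      if (size g < size f)%N then g
      else skew_rmod_rec f n'
             (g - skew_mul ((lead_coef g)%:P * 'X^(size g - size f)) f)
  end.

Definition skew_rmod (f g : {poly D}) : {poly D} := skew_rmod_rec f (size g) g.

(* carrier of the Petit algebra S_f: polynomials of degree < deg f *)
Definition petit_set (f : {poly D}) : pred {poly D} := fun p => (size p < size f)%N.

Definition petit_mul (f g h : {poly D}) : {poly D} := skew_rmod f (skew_mul g h).

Definition petit_assoc (f x y z : {poly D}) : {poly D} :=
  petit_mul f (petit_mul f x y) z - petit_mul f x (petit_mul f y z).

Definition nuc_l (f x : {poly D}) : Prop :=
  forall y z, petit_set f y -> petit_set f z -> petit_assoc f x y z = 0.
Definition nuc_m (f x : {poly D}) : Prop :=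
  forall y z, petit_set f y -> petit_set f z -> petit_assoc f y x z = 0.
Definition nuc_r (f x : {poly D}) : Prop :=
  forall y z, petit_set f y -> petit_set f z -> petit_assoc f y z x = 0.
Definition nuc (f x : {poly D}) : Prop := nuc_l f x /\ nuc_m f x /\ nuc_r f x.

Definition petit_associative (f : {poly D}) : Prop :=
  forall x y z, petit_set f x -> petit_set f y -> petit_set f z ->
    petit_assoc f x y z = 0.

Definition right_semi_invariant (f : {poly D}) : Prop :=
  forall a : D, exists b : D, skew_mul f a%:P = skew_mul b%:P f.

End Skew.

(* Main.v *)
Require Import Defs.
From HB Require Import structures.
From mathcomp Require Import all_boot all_order all_algebra zify.
Import GRing.Theory.
Local Open Scope ring_scope.

Lemma coef_size_lt (R : nzRingType) (p : {poly R}) i : p`_i != 0 -> (i < size p)%N.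
Proof. apply: contraR; rewrite -leqNgt => H; by rewrite nth_default. Qed.

Lemma size_eqS (R : nzRingType) (p : {poly R}) n :
  (size p <= n.+1)%N -> p`_n != 0 -> size p = n.+1.
Proof. move=> H1 H2; apply/eqP; rewrite eqn_leq H1; exact: coef_size_lt. Qed.

Lemma size_sub_lead (R : nzRingType) (p q : {poly R}) n :
  (size p <= n.+1)%N -> (size q <= n.+1)%N -> p`_n = q`_n -> (size (p - q)%R <= n)%N.
Proof.
move=> Hp Hq E; apply/leq_sizeP => j; rewrite leq_eqVlt => /orP [/eqP <-|Hj].
  by rewrite coefB E subrr.
by rewrite coefB !nth_default ?subrr // (leq_trans _ Hj).
Qed.

Section Skew.
Variable D : unitRingType.
Hypothesis D_div : forall x : D, x != 0 -> x \is a GRing.unit.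
Variable sigma : {rmorphism D -> D}.
Variable delta : D -> D.
Hypothesis delta_add : forall a b : D, delta (a + b) = delta a + delta b.
Hypothesis delta_mul : forall a b : D, delta (a * b) = sigma a * delta b + delta a * b.

Local Notation T := (skew_mulX sigma delta).
Local Notation Mul := (skew_mul sigma delta).

Lemma delta0 : delta 0 = 0.
Proof. have H := delta_add 0 0; rewrite addr0 in H; apply: (addrI (delta 0)); rewrite addr0 -H //. Qed.

Lemma delta1 : delta 1 = 0.
Proof. have H := delta_mul 1 1; rewrite !mulr1 rmorph1 !mul1r in H; apply: (addrI (delta 1)); rewrite addr0 -H //. Qed.

Lemma deltaN a : delta (- a) = - delta a.
Proof. apply/eqP; rewrite -subr_eq0 opprK -delta_add addNr delta0 //. Qed.

Lemma sigma_neq0 a : a != 0 -> sigma a != 0.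
Proof.
move=> /D_div Ha; apply/eqP => E.
have := rmorph_unit sigma Ha; rewrite E unitr0 //.
Qed.

Lemma coefT (p : {poly D}) i : (T p)`_i = (if i is i'.+1 then sigma p`_i' else 0) + delta p`_i.
Proof.
rewrite /skew_mulX coefD coefMX !coef_map_id0 ?delta0 ?rmorph0 //.
by case: i.
Qed.

Lemma TD (p q : {poly D}) : T (p + q) = T p + T q.
Proof.
apply/polyP => i; rewrite coefD !coefT !coefD delta_add.
case: i => [|i]; rewrite ?add0r // coefD rmorphD addrACA //.

Qed.

Lemma T0 : T 0 = 0.
Proof. apply/polyP => i; rewrite coefT coef0 delta0; case: i => [|i] //=; rewrite ?addr0 // coef0 rmorph0 //. Qed.


Lemma TN (p : {poly D}) : T (- p) = - T p.
Proof. apply/eqP; rewrite -subr_eq0 opprK -TD addNr T0 //. Qed.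

Lemma TC (a : D) (p : {poly D}) : T (a%:P * p) = (sigma a)%:P * T p + (delta a)%:P * p.
Proof.
apply/polyP => i; case: i => [|i]; rewrite coefT coefD !coefCM !coefT delta_mul mulrDr ?coefCM ?rmorphM ?mulr0 ?add0r ?addrA //.
Qed.

Lemma iterTD n (p q : {poly D}) : iter n T (p + q) = iter n T p + iter n T q.
Proof. elim: n => [|n IH] //=; rewrite IH TD //. Qed.
Lemma iterT0 n : iter n T 0 = 0.
Proof. elim: n => [|n IH] //=; rewrite IH T0 //. Qed.
Lemma iterTN n (p : {poly D}) : iter n T (- p) = - iter n T p.
Proof. elim: n => [|n IH] //=; rewrite IH TN //. Qed.

Lemma MulE n (g h : {poly D}) : (size g <= n)%N ->
  Mul g h = \sum_(i < n) (g`_i)%:P * iter i T h.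
Proof.
move=> Hn; rewrite /skew_mul (big_ord_widen _ (fun i => (g`_i)%:P * iter i T h) Hn).
rewrite big_mkcond; apply: eq_bigr => i _; case: ifP => // /negbT; rewrite -leqNgt => H.
by rewrite nth_default // mul0r.
Qed.
Arguments MulE [n g] h.


Lemma Mul0l (h : {poly D}) : Mul 0 h = 0.
Proof. by rewrite /skew_mul size_poly0 big_ord0. Qed.

Lemma MulDl (g1 g2 h : {poly D}) : Mul (g1 + g2) h = Mul g1 h + Mul g2 h.
Proof.
have H : (size (g1 + g2)%R <= size g1 + size g2)%N.
  apply: leq_trans (size_polyD _ _) _; rewrite geq_max leq_addr leq_addl //.
rewrite (MulE _ H) (MulE _ (leq_addr (size g2) (size g1))) (MulE _ (leq_addl (size g1) (size g2))) -big_split.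
by apply: eq_bigr => i _; rewrite coefD polyCD mulrDl.
Qed.

Lemma MulNl (g h : {poly D}) : Mul (- g) h = - Mul g h.
Proof.
have H : (size (- g)%R <= size g)%N by rewrite size_polyN.
rewrite (MulE _ H) (MulE _ (leqnn _)) -sumrN.
by apply: eq_bigr => i _; rewrite coefN polyCN mulNr.
Qed.

Lemma MulBl (g1 g2 h : {poly D}) : Mul (g1 - g2) h = Mul g1 h - Mul g2 h.
Proof. by rewrite MulDl MulNl. Qed.

Lemma MulCl (a : D) (g h : {poly D}) : Mul (a%:P * g) h = a%:P * Mul g h.
Proof.
have H : (size (a%:P * g)%R <= size g)%N.
  apply: leq_trans (size_polyMleq _ _) _; rewrite size_polyC; by case: (a != 0); rewrite ?add1n ?add0n ?leq_pred.
rewrite (MulE _ H) (MulE _ (leqnn _)) mulr_sumr.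
by apply: eq_bigr => i _; rewrite coefCM polyCM mulrA.
Qed.

Lemma MulDr (g h1 h2 : {poly D}) : Mul g (h1 + h2) = Mul g h1 + Mul g h2.
Proof.
rewrite /skew_mul -big_split; apply: eq_bigr => i _; by rewrite iterTD mulrDr.
Qed.

Lemma MulNr (g h : {poly D}) : Mul g (- h) = - Mul g h.
Proof.
rewrite /skew_mul -sumrN; apply: eq_bigr => i _; by rewrite iterTN mulrN.
Qed.

Lemma MulBr (g h1 h2 : {poly D}) : Mul g (h1 - h2) = Mul g h1 - Mul g h2.
Proof. by rewrite MulDr MulNr. Qed.

Lemma Mul0r (g : {poly D}) : Mul g 0 = 0.
Proof. rewrite /skew_mul big1 // => i _; by rewrite iterT0 mulr0. Qed.

Lemma MulC (a : D) (h : {poly D}) : Mul a%:P h = a%:P * h.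
Proof.
have H : (size a%:P <= 1)%N by rewrite size_polyC; case: (a != 0).
by rewrite (MulE _ H) big_ord1 /= coefC.
Qed.

Lemma Mul1 (h : {poly D}) : Mul 1 h = h.
Proof. by rewrite -polyC1 MulC polyC1 mul1r. Qed.

Lemma MulXn (c : D) j (h : {poly D}) : Mul (c%:P * 'X^j) h = c%:P * iter j T h.
Proof.
rewrite MulCl.
have H : (size ('X^j : {poly D}) <= j.+1)%N by rewrite size_polyXn.
rewrite (MulE _ H) big_ord_recr /= big1 ?add0r ?coefXn ?eqxx ?mul1r //.
move=> i _; rewrite coefXn; have := ltn_ord i; rewrite ltn_neqAle => /andP [/negbTE -> _].
by rewrite mul0r.
Qed.

Lemma sizeT_le (p : {poly D}) : (size (T p) <= (size p).+1)%N.
Proof.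
apply/leq_sizeP => j Hj; rewrite coefT; case: j Hj => [|j] // Hj.
by rewrite !nth_default ?rmorph0 ?delta0 ?addr0 // ltnW.
Qed.

Lemma size_iterT_le i (p : {poly D}) : (size (iter i T p) <= size p + i)%N.
Proof.
elim: i => [|i IH] /=; first by rewrite addn0.
apply: leq_trans (sizeT_le _) _; by rewrite addnS ltnS.
Qed.

Lemma MulT (p h : {poly D}) : Mul (T p) h = T (Mul p h).
Proof.
rewrite (MulE _ (sizeT_le p)) (MulE _ (leqnn _)).
rewrite (big_morph T TD T0).
have -> : \sum_(i < (size p).+1) ((T p)`_i)%:P * iter i T h =
  \sum_(i < (size p).+1) ((if nat_of_ord i is i'.+1 then sigma p`_i' else 0)%:P * iter i T h)
  + \sum_(i < (size p).+1) (delta p`_i)%:P * iter i T h.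
  by rewrite -big_split; apply: eq_bigr => i _; rewrite coefT polyCD mulrDl.
rewrite big_ord_recl big_ord_recr /= polyC0 mul0r add0r (nth_default _ (leqnn _)) delta0 polyC0 mul0r addr0.
rewrite -big_split; apply: eq_bigr => i _; rewrite TC add0n /=; done.
Qed.

Lemma MuliterT i (p h : {poly D}) : Mul (iter i T p) h = iter i T (Mul p h).
Proof. elim: i => [|i IH] //=; by rewrite MulT IH. Qed.

Lemma MulA (g h k : {poly D}) : Mul (Mul g h) k = Mul g (Mul h k).
Proof.
have -> : Mul g h = \sum_(i < size g) (g`_i)%:P * iter i T h by [].
rewrite (big_morph (fun x => Mul x k) (fun x y => MulDl x y k) (Mul0l k)).
under eq_bigr => i _ do rewrite MulCl MuliterT.
by [].
Qed.


Lemma iter_sigma_neq0 j (a : D) : a != 0 -> iter j sigma a != 0.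
Proof. elim: j => [|j IH] //= Ha; exact: sigma_neq0 (IH Ha). Qed.

Lemma iter_sigma1 j : iter j sigma 1 = 1.
Proof. elim: j => [|j IH] //=; by rewrite IH rmorph1. Qed.

Lemma sizeT_eq (p : {poly D}) : lead_coef p != 0 ->
  size (T p) = (size p).+1 /\ lead_coef (T p) = sigma (lead_coef p).
Proof.
move=> Hl.
have Hs : (0 < size p)%N by rewrite size_poly_gt0 -lead_coef_eq0.
have Hc : (T p)`_(size p) = sigma (lead_coef p).
  rewrite coefT lead_coefE (nth_default _ (leqnn _)) delta0 addr0.
  by case: (size p) Hs.
have HS : size (T p) = (size p).+1.
  apply: size_eqS; first exact: sizeT_le.
  by rewrite Hc sigma_neq0.
by split => //; rewrite lead_coefE HS.
Qed.

Lemma iterT_eq j (p : {poly D}) : lead_coef p != 0 ->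
  size (iter j T p) = (size p + j)%N /\ lead_coef (iter j T p) = iter j sigma (lead_coef p).
Proof.
move=> Hl; elim: j => [|j [IHs IHl]] /=; first by rewrite addn0.
have Hl' : lead_coef (iter j T p) != 0 by rewrite IHl iter_sigma_neq0.
have [-> ->] := sizeT_eq _ Hl'; by rewrite IHs IHl addnS.
Qed.

Lemma size_Mul_le (g h : {poly D}) : (size (Mul g h) <= (size h + size g).-1)%N.
Proof.
rewrite /skew_mul; apply: (big_ind (fun p : {poly D} => size p <= (size h + size g).-1)%N).
- by rewrite size_poly0.
- move=> x y Hx Hy; apply: leq_trans (size_polyD _ _) _; by rewrite geq_max Hx Hy.
move=> i _; apply: leq_trans (size_polyMleq _ _) _.
apply: leq_trans (_ : (size (iter i T h) <= _)%N).
  rewrite size_polyC; case: (_ != 0); rewrite ?add1n ?add0n ?leq_pred //.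
apply: leq_trans (size_iterT_le _ _) _.
have := ltn_ord i; lia.
Qed.

Variable f : {poly D}.
Hypothesis f_monic : f \is monic.

Lemma iterT_monic j : size (iter j T f) = (size f + j)%N /\ iter j T f \is monic.
Proof.
have Hl : lead_coef f != 0 by rewrite (monicP f_monic) oner_eq0.
have [-> Hl2] := iterT_eq j _ Hl; split => //; apply/monicP.
by rewrite Hl2 (monicP f_monic) iter_sigma1.
Qed.

Lemma Mul_monic (q : {poly D}) : q != 0 ->
  size (Mul q f) = ((size q).-1 + size f)%N /\ lead_coef (Mul q f) = lead_coef q.
Proof.
move=> Hq.
have Hs : (0 < size q)%N by rewrite size_poly_gt0.
rewrite (MulE f (leqnn (size q))).
have Hlq : lead_coef q = q`_(size q).-1 by rewrite lead_coefE.
move: Hs; case Es: (size q) => [|s] // _ /=.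
rewrite big_ord_recr /=.
have [Hs1 Hm1] := iterT_monic s.
have Hc : q`_s != 0 by rewrite Es /= in Hlq; rewrite -Hlq lead_coef_eq0.
have Hlast : size ((q`_s)%:P * iter s T f) = (size f + s)%N.
  by rewrite size_Mmonic ?polyC_eq0 // size_polyC Hc Hs1 add1n.
have Hrest : (size (\sum_(i < s) (q`_i)%:P * iter i T f)%R < size f + s)%N.
  apply: (big_ind (fun p : {poly D} => size p < size f + s)%N).
  - by rewrite size_poly0 addn_gt0 size_poly_gt0 monic_neq0.
  - move=> x y Hx Hy; apply: leq_ltn_trans (size_polyD _ _) _; by rewrite gtn_max Hx Hy.
  move=> i _; apply: leq_ltn_trans (size_polyMleq _ _) _.
  apply: (@leq_ltn_trans (size (iter i T f))).
    rewrite size_polyC; case: (_ != 0); rewrite ?add1n ?add0n ?leq_pred //.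
  by rewrite (proj1 (iterT_monic i)) ltn_add2l.
rewrite addrC size_polyDl; last by rewrite Hlast.
split; first by rewrite Hlast addnC.
rewrite lead_coefDl; last by rewrite Hlast.
by rewrite lead_coef_Mmonic // lead_coefC Hlq Es.

Qed.


Local Notation rec := (skew_rmod_rec sigma delta f).
Local Notation M := (skew_rmod sigma delta f).

Lemma size_f_gt0 : (0 < size f)%N.
Proof. by rewrite size_poly_gt0 monic_neq0. Qed.

Lemma rec_spec n (g : {poly D}) :
  (exists q, g - rec n g = Mul q f) /\ ((size g < n + size f)%N -> (size (rec n g) < size f)%N).
Proof.
elim: n g => [|n IH] g /=.
  by split; [exists 0; rewrite subrr Mul0l | rewrite add0n].
case: ifP => Hlt.
  by split; [exists 0; rewrite subrr Mul0l | ].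
move/negbT: Hlt; rewrite -leqNgt => Hle.
set c := lead_coef g; set k := (size g - size f)%N.
set g' := g - Mul (c%:P * 'X^k) f.
have [[q Hq] Hs] := IH g'.
split.
  exists (c%:P * 'X^k + q); rewrite MulDl -Hq /g'.
  by rewrite addrA [Mul _ f + _]addrC subrK.
move=> Hn; apply: Hs.
have Hgpos : (0 < size g)%N := leq_trans size_f_gt0 Hle.
have Hc : c != 0 by rewrite lead_coef_eq0 -size_poly_gt0.
have [Hk Hkm] := iterT_monic k.
have Hsz : size (c%:P * iter k T f) = size g.
  by rewrite size_Mmonic ?polyC_eq0 // size_polyC Hc Hk add1n /= /k subnKC.
have Hg' : (size g' <= (size g).-1)%N.
  have Hl2 : lead_coef (c%:P * iter k T f) = c by rewrite lead_coef_Mmonic // lead_coefC.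
  rewrite lead_coefE Hsz in Hl2.
  rewrite /g' MulXn; apply: size_sub_lead; rewrite ?prednK ?Hsz //.
apply: leq_ltn_trans Hg' _; move: Hn Hgpos; case: (size g) => // m; rewrite addSn ltnS //.
Qed.

Lemma M_spec (g : {poly D}) : (exists q, g - M g = Mul q f) /\ (size (M g) < size f)%N.
Proof.
have [H1 H2] := rec_spec (size g) g; split => //; apply: H2.
by rewrite -[X in (X < _)%N]addn0 ltn_add2l size_f_gt0.
Qed.

Lemma Rf_small0 (r q : {poly D}) : (size r < size f)%N -> r = Mul q f -> r = 0.
Proof.
move=> Hs Hr; have [Eq|Hq] := eqVneq q 0; first by rewrite Hr Eq Mul0l.
have [Hsz _] := Mul_monic _ Hq; move: Hs; rewrite Hr Hsz ltnNge leq_addl //.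
Qed.

Lemma M_char (g r : {poly D}) : (size r < size f)%N -> (exists q, g - r = Mul q f) -> M g = r.
Proof.
move=> Hr [q Hq]; have [[q2 Hq2] Hs] := M_spec g.
apply: subr0_eq; apply: (@Rf_small0 _ (q - q2)).
  apply: leq_ltn_trans (size_polyD _ _) _; by rewrite gtn_max size_polyN Hs Hr.
by rewrite MulBl -Hq -Hq2 opprB [RHS]addrC addrA subrK.
Qed.

Lemma M_small (r : {poly D}) : (size r < size f)%N -> M r = r.
Proof. move=> H; apply: M_char => //; exists 0; by rewrite subrr Mul0l. Qed.

Lemma M_Rf (q : {poly D}) : M (Mul q f) = 0.
Proof. apply: M_char; first by rewrite size_poly0 size_f_gt0. by exists q; rewrite subr0. Qed.

Lemma M_D (g h : {poly D}) : M (g + h) = M g + M h.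
Proof.
have [[q1 H1] S1] := M_spec g; have [[q2 H2] S2] := M_spec h.
apply: M_char.
  apply: leq_ltn_trans (size_polyD _ _) _; by rewrite gtn_max S1 S2.
exists (q1 + q2); rewrite MulDl -H1 -H2 opprD addrACA //.
Qed.

Lemma M_N (g : {poly D}) : M (- g) = - M g.
Proof.
have [[q1 H1] S1] := M_spec g.
apply: M_char; first by rewrite size_polyN.
exists (- q1); rewrite MulNl -H1 opprB opprK addrC //.
Qed.

Lemma M_B (g h : {poly D}) : M (g - h) = M g - M h.
Proof. by rewrite M_D M_N. Qed.

Lemma M_C (a : D) (g : {poly D}) : M (a%:P * g) = a%:P * M g.
Proof.
have [[q1 H1] S1] := M_spec g.
apply: M_char.
  apply: leq_ltn_trans (size_polyMleq _ _) _; rewrite size_polyC.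
  by case: (_ != 0); rewrite ?add1n ?add0n //= (leq_ltn_trans (leq_pred _) S1).
exists (a%:P * q1); by rewrite MulCl -H1 mulrBr.
Qed.


Lemma assoc_formula (y z w q r : {poly D}) : Mul y z = Mul q f + r -> (size r < size f)%N ->
  petit_assoc sigma delta f y z w = - M (Mul q (Mul f w)).
Proof.
move=> E Hr; rewrite /petit_assoc /petit_mul.
have E1 : M (Mul y z) = r.
  by apply: M_char => //; exists q; rewrite E addrK.
have [[q2 H2] _] := M_spec (Mul z w).
have E2 : M (Mul z w) = Mul z w - Mul q2 f by rewrite -H2 opprB addrC subrK.
have Er : r = Mul y z - Mul q f by rewrite E [Mul q f + r]addrC addrK.
rewrite E1 E2 Er MulBl MulBr !MulA -(MulA y q2 f) !M_B M_Rf subr0.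
by rewrite addrAC subrr add0r.
Qed.

Lemma assoc_gen (y z w : {poly D}) : exists q,
  petit_assoc sigma delta f y z w = - M (Mul q (Mul f w)).
Proof.
have [[q Hq] Hs] := M_spec (Mul y z); exists q; apply: assoc_formula Hs.
by rewrite -Hq subrK.
Qed.


Lemma TXn (i : nat) : T ('X^i) = 'X^(i.+1).
Proof.
rewrite /skew_mulX.
have -> : map_poly delta ('X^i : {poly D}) = 0.
  apply/polyP => j; rewrite coef_map_id0 ?delta0 // coefXn coef0.
  by case: (j == i); rewrite ?delta1 ?delta0.
by rewrite map_polyXn addr0 exprSr.
Qed.

Lemma MulXnX (j : nat) : Mul 'X^j 'X = 'X^(j.+1).
Proof.
rewrite -[('X^j : {poly D})]mul1r -polyC1 MulXn polyC1 mul1r.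
elim: j => [|j IH] /=; first by rewrite expr1.
by rewrite IH TXn.
Qed.

Lemma semi_nuc_r : right_semi_invariant sigma delta f -> forall a : D, nuc_r sigma delta f a%:P.
Proof.
move=> Hsi a y z _ _; have [q ->] := assoc_gen y z a%:P.
have [b ->] := Hsi a; by rewrite -MulA M_Rf oppr0.
Qed.

Lemma nuc_r_semi : (2 < size f)%N -> (forall a : D, nuc_r sigma delta f a%:P) -> right_semi_invariant sigma delta f.
Proof.
move=> Hdeg H a.
set m := (size f).-1.
have Hm : size f = m.+1 by rewrite /m prednK // size_f_gt0.
have Hy : petit_set f ('X^(m.-1)).
  by rewrite /petit_set size_polyXn Hm prednK // -ltnS -Hm ltnW.
have Hz : petit_set f 'X by rewrite /petit_set size_polyX.
have HA := H a _ _ Hy Hz.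
have Hr : (size ('X^m - f)%R < size f)%N.
  rewrite Hm ltnS; apply: size_sub_lead; rewrite ?size_polyXn ?Hm //.
  by rewrite coefXn eqxx -[m]/(m.+1.-1) -Hm -lead_coefE (monicP f_monic).
have E : Mul 'X^(m.-1) 'X = Mul 1 f + ('X^m - f).
  by rewrite MulXnX prednK ?Mul1 1?addrC ?subrK // -ltnS -Hm ltnW.
rewrite (assoc_formula _ _ a%:P _ _ E Hr) Mul1 in HA.
move/eqP: HA; rewrite oppr_eq0 => /eqP HM.
have [[q Hq] _] := M_spec (Mul f a%:P).
rewrite HM subr0 in Hq.
exists q`_0; rewrite -size1_polyC ?Hq //.
have [->|Hq0] := eqVneq q 0; first by rewrite size_poly0.
have [Hsz _] := Mul_monic _ Hq0.
have := size_Mul_le f a%:P; rewrite Hq Hsz size_polyC.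
case: (a != 0) => /=; rewrite ?add1n ?add0n /=; lia.
Qed.


Lemma const_nuc : right_semi_invariant sigma delta f -> forall a : D, nuc sigma delta f a%:P.
Proof.
move=> Hsi a; split; [|split]; last exact: semi_nuc_r.
- move=> y z Hy Hz.
  have E : Mul a%:P y = Mul 0 f + a%:P * y by rewrite Mul0l add0r MulC.
  have Hr : (size (a%:P * y)%R < size f)%N.
    apply: leq_ltn_trans (size_polyMleq _ _) _; rewrite size_polyC.
    by case: (_ != 0); rewrite ?add1n ?add0n //= (leq_ltn_trans (leq_pred _) Hy).
  by rewrite (assoc_formula _ _ z _ _ E Hr) Mul0l M_small ?oppr0 // size_poly0 size_f_gt0.
- move=> y z Hy Hz.
  have E : Mul y a%:P = Mul 0 f + Mul y a%:P by rewrite Mul0l add0r.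
  have Hr : (size (Mul y a%:P) < size f)%N.
    apply: leq_ltn_trans (size_Mul_le _ _) _; rewrite size_polyC.
    by case: (_ != 0); rewrite ?add1n ?add0n //= (leq_ltn_trans (leq_pred _) Hy).
  by rewrite (assoc_formula _ _ z _ _ E Hr) Mul0l M_small ?oppr0 // size_poly0 size_f_gt0.
Qed.

Lemma fRf_assoc : (forall w, petit_set f w -> M (Mul f w) = 0) -> petit_associative sigma delta f.
Proof.
move=> H x y z _ _ Hz; have [q ->] := assoc_gen x y z.
have [[q' Hq'] _] := M_spec (Mul f z); rewrite H // subr0 in Hq'.
by rewrite Hq' -MulA M_Rf oppr0.
Qed.

Lemma nuc_big (x : {poly D}) : petit_set f x -> nuc sigma delta f x -> (1 < size x)%N ->
  petit_associative sigma delta f.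
Proof.
move=> Hx [_ [Hm _]] Hs; apply: fRf_assoc => w Hw.
set j := (size f - size x)%N.
have Hj : (size f = size x + j)%N by rewrite /j subnKC // ltnW.
have Hy : petit_set f 'X^j by rewrite /petit_set size_polyXn Hj; lia.
have Hl : lead_coef x != 0 by rewrite lead_coef_eq0 -size_poly_gt0 ltnW.
have [Hsz Hlc] := iterT_eq j _ Hl.
set c := iter j sigma (lead_coef x).
have Hc : c != 0 by rewrite iter_sigma_neq0.
have E0 : Mul 'X^j x = iter j T x by rewrite -[('X^j : {poly D})]mul1r -polyC1 MulXn polyC1 mul1r.
have Hcf : size (c%:P * f) = size f by rewrite size_Mmonic ?polyC_eq0 // size_polyC Hc add1n.
have Hcl : lead_coef (c%:P * f) = c by rewrite lead_coef_Mmonic // lead_coefC.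
have E : Mul 'X^j x = Mul c%:P f + (Mul 'X^j x - c%:P * f).
  by rewrite MulC addrC subrK.
have Hr : (size (Mul 'X^j x - c%:P * f)%R < size f)%N.
  have Hf0 := size_f_gt0.
  rewrite -(prednK Hf0) ltnS; apply: size_sub_lead; rewrite ?prednK ?E0 ?Hsz ?Hcf -?Hj //.
  rewrite lead_coefE Hsz -Hj in Hlc; rewrite lead_coefE Hcf in Hcl.
  by rewrite Hlc Hcl.
have := Hm _ _ Hy Hw; rewrite (assoc_formula _ _ w _ _ E Hr) MulC M_C.
move/eqP; rewrite oppr_eq0 => /eqP HC.
have Hu : c \is a GRing.unit by apply: D_div.
by rewrite -[M _]mul1r -polyC1 -(mulVr Hu) polyCM -mulrA HC mulr0.
Qed.

End Skew.

From Stdlib Require Import Classical.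

Theorem mainTheorem1 (D : unitRingType)
  (D_div : forall x : D, x != 0 -> x \is a GRing.unit)
  (sigma : {rmorphism D -> D}) (delta : D -> D)
  (delta_add : forall a b : D, delta (a + b) = delta a + delta b)
  (delta_mul : forall a b : D, delta (a * b) = sigma a * delta b + delta a * b)
  (f : {poly D}) (f_monic : f \is monic) (f_deg : (2 < size f)%N) :
  (right_semi_invariant sigma delta f <->
     (forall a : D, nuc_r sigma delta f a%:P))
  /\
  (right_semi_invariant sigma delta f ->
     (forall x : {poly D}, petit_set f x ->
        (nuc sigma delta f x <-> exists a : D, x = a%:P))
     \/ petit_associative sigma delta f).
Proof.
split.
  split; [exact: (semi_nuc_r _ D_div sigma delta delta_add delta_mul f f_monic)
         | exact: (nuc_r_semi _ D_div sigma delta delta_add delta_mul f f_monic f_deg)].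
move=> Hsi; case: (classic (petit_associative sigma delta f)) => Ha; [right => // | left].
move=> x Hx; split.
  move=> Hn; case: (leqP (size x) 1) => Hs.
    by exists x`_0; exact: size1_polyC.
  by exfalso; apply: Ha; exact: (nuc_big _ D_div sigma delta delta_add delta_mul f f_monic x Hx Hn Hs).
by move=> [a ->]; exact: (const_nuc _ D_div sigma delta delta_add delta_mul f f_monic Hsi).
Qed.
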